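(* Let $\alpha,\beta$ be cardinals with $\alpha>2$ and $\beta>2$. The class of $(\alpha,\beta)$-representable posets is not closed under substructures, i.e. there is an $(\alpha,\beta)$-representable poset $P$ and a subset $P'\subseteq P$ such that $P'$ with the induced order is not $(\alpha,\beta)$-representable.
   Context: For posets $P,Q$, a monotone map $h:P\to Q$ is an $(\alpha,\beta)$-morphism if whenever $S\subseteq P$ with $|S|<\alpha$ and $\bigwedge S$ exists in $P$, then $h(\bigwedge S)=\bigwedge h[S]$, and whenever $T\subseteq P$ with $|T|<\beta$ and $\bigvee T$ exists in $P$, then $h(\bigvee T)=\bigvee h[T]$. A poset $P$ is $(\alpha,\beta)$-representable if there is a set $X$ and an $(\alpha,\beta)$-morphism $h:P\to\wp(X)$ that is an order embedding, where $\wp(X)$ is the power set of $X$ ordered by inclusion. Posets are regarded as structures in the signature with one binary relation $\leq$. *)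

(* Defs.v *)
Definition card_le (A B : Type) : Prop :=
  exists f : A -> B, forall x y, f x = f y -> x = y.

(* |A| < |B|  (with choice, equivalent to the usual cardinal order) *)
Definition card_lt (A B : Type) : Prop := card_le A B /\ ~ card_le B A.

Definition card_gt2 (A : Type) : Prop :=
  exists a b c : A, a <> b /\ a <> c /\ b <> c.

Definition is_poset (T : Type) (le : T -> T -> Prop) : Prop :=
  (forall x, le x x) /\
  (forall x y, le x y -> le y x -> x = y) /\
  (forall x y z, le x y -> le y z -> le x z).

Definition is_meet {T : Type} (le : T -> T -> Prop) (S : T -> Prop) (m : T) : Prop :=
  (forall s, S s -> le m s) /\ (forall x, (forall s, S s -> le x s) -> le x m).

Definition is_join {T : Type} (le : T -> T -> Prop) (S : T -> Prop) (j : T) : Prop :=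
  (forall s, S s -> le s j) /\ (forall x, (forall s, S s -> le s x) -> le j x).

Definition pset (X : Type) : Type := X -> Prop.
Definition psubset {X : Type} (U V : pset X) : Prop := forall x, U x -> V x.

Definition image {T U : Type} (h : T -> U) (S : T -> Prop) : U -> Prop :=
  fun u => exists s, S s /\ h s = u.

Definition subset_card_lt {T : Type} (S : T -> Prop) (alpha : Type) : Prop :=
  card_lt {x : T | S x} alpha.

(* (alpha,beta)-morphism P -> Q, cardinals given as types (alpha = |A|, beta = |B|).
   "h(/\S) = /\h[S]" is rendered as: h(m) is the meet of h[S] in Q. *)
Definition ab_morphism (A B : Type) {P Q : Type}
  (leP : P -> P -> Prop) (leQ : Q -> Q -> Prop) (h : P -> Q) : Prop :=
  (forall x y, leP x y -> leQ (h x) (h y)) /\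
  (forall (S : P -> Prop) (m : P), subset_card_lt S A -> is_meet leP S m ->
       is_meet leQ (image h S) (h m)) /\
  (forall (S : P -> Prop) (j : P), subset_card_lt S B -> is_join leP S j ->
       is_join leQ (image h S) (h j)).

Definition ab_representable (A B : Type) (P : Type) (leP : P -> P -> Prop) : Prop :=
  exists (X : Type) (h : P -> pset X),
    ab_morphism A B leP (@psubset X) h /\
    (forall x y, leP x y <-> psubset (h x) (h y)).

Definition induced {P : Type} (leP : P -> P -> Prop) (P' : P -> Prop) :
  {x : P | P' x} -> {x : P | P' x} -> Prop :=
  fun x y => leP (proj1_sig x) (proj1_sig y).

(* Main.v *)
Require Import Defs.
From Stdlib Require Import ClassicalEpsilon ProofIrrelevance FunctionalExtensionality PropExtensionality.

Lemma sig_eq_val {T} (S : T -> Prop) (x y : {t | S t}) : proj1_sig x = proj1_sig y -> x = y.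
Proof.
  destruct x as [x px], y as [y py]; simpl; intros ->.
  f_equal; apply proof_irrelevance.
Qed.

Lemma two_lt (T A : Type) (S : T -> Prop) (u v : T) :
  (forall s, S s -> s = u \/ s = v) -> card_gt2 A -> card_lt {x | S x} A.
Proof.
  intros HS [a [b [c [Hab [Hac Hbc]]]]]. split.
  - exists (fun x => if excluded_middle_informative (proj1_sig x = u) then a else b).
    intros x y. destruct (excluded_middle_informative (proj1_sig x = u)) as [e1|n1];
    destruct (excluded_middle_informative (proj1_sig y = u)) as [e2|n2]; intro E.
    + apply sig_eq_val; congruence.
    + congruence.
    + congruence.
    + apply sig_eq_val.
      destruct x as [x px], y as [y py]; simpl in *.
      destruct (HS x px); destruct (HS y py); congruence.
  - intros [g Hg].
    destruct (g a) as [ga pa] eqn:Ea; destruct (g b) as [gb pb] eqn:Eb;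
    destruct (g c) as [gc pc] eqn:Ec.
    assert (Hx : forall p q, proj1_sig (g p) = proj1_sig (g q) -> p = q)
      by (intros p q H; apply Hg, sig_eq_val, H).
    destruct (HS ga pa); destruct (HS gb pb); destruct (HS gc pc); subst;
    first [ apply Hab, Hx; rewrite Ea, Eb; reflexivity
          | apply Hac, Hx; rewrite Ea, Ec; reflexivity
          | apply Hbc, Hx; rewrite Eb, Ec; reflexivity ].
Qed.

Inductive three := t1 | t2 | t3.

Definition e0 : pset three := fun _ => False.
Definition ea : pset three := fun x => x = t1.
Definition eb : pset three := fun x => x = t2.
Definition ec : pset three := fun x => x = t3.
Definition e1 : pset three := fun _ => True.

Definition PP (U : pset three) : Prop :=
  U = e0 \/ U = ea \/ U = eb \/ U = ec \/ U = e1.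

Definition p0 : {U | PP U} := exist _ e0 (or_introl eq_refl).
Definition pa : {U | PP U} := exist _ ea (or_intror (or_introl eq_refl)).
Definition pb : {U | PP U} := exist _ eb (or_intror (or_intror (or_introl eq_refl))).
Definition pc : {U | PP U} := exist _ ec (or_intror (or_intror (or_intror (or_introl eq_refl)))).
Definition p1 : {U | PP U} := exist _ e1 (or_intror (or_intror (or_intror (or_intror eq_refl)))).

Lemma meet_ab (q : {U | PP U}) (Hq : q = pb \/ q = pc) :
  is_meet (induced psubset PP) (fun s => s = pa \/ s = q) p0.
Proof.
  split.
  - intros s _ x [].
  - intros x H y Hy.
    assert (H1 := H pa (or_introl eq_refl) y Hy).
    assert (H2 := H q (or_intror eq_refl) y Hy).
    destruct Hq; subst; simpl in *; unfold ea, eb, ec in *; congruence.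
Qed.

Lemma join_bc : is_join (induced psubset PP) (fun s => s = pb \/ s = pc) p1.
Proof.
  split.
  - intros s _ x _; exact I.
  - intros [x px] H.
    assert (H1 := H pb (or_introl eq_refl) t2 eq_refl).
    assert (H2 := H pc (or_intror eq_refl) t3 eq_refl).
    simpl in *. unfold induced; simpl.
    destruct px as [->|[->|[->|[->| ->]]]]; unfold e0, ea, eb, ec in *;
      try discriminate; try contradiction; intros y _; exact I.
Qed.

Theorem proposition2p8 :
  forall (A B : Type), card_gt2 A -> card_gt2 B ->
  exists (P : Type) (leP : P -> P -> Prop),
    is_poset P leP /\ ab_representable A B P leP /\
    exists P' : P -> Prop,
      ~ ab_representable A B {x : P | P' x} (induced leP P').
Proof.
  intros A B HA HB.
  exists (pset three), psubset. split; [|split].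
  - split; [|split].
    + intros x y H; exact H.
    + intros x y H1 H2. apply functional_extensionality; intro z.
      apply propositional_extensionality; split; auto.
    + intros x y z H1 H2 w Hw; auto.
  - exists three, (fun U => U). split; [|split; auto; intros; apply iff_refl].
    split; [|split].
    + auto.
    + intros S m _ [H1 H2]. split.
      * intros s [s0 [Hs0 <-]]; auto.
      * intros x Hx; apply H2; intros s Hs; apply Hx; exists s; auto.
    + intros S m _ [H1 H2]. split.
      * intros s [s0 [Hs0 <-]]; auto.
      * intros x Hx; apply H2; intros s Hs; apply Hx; exists s; auto.
  - exists PP. intros [X [h [[Hmon [Hmeet Hjoin]] Hemb]]].
    assert (Mb := Hmeet _ _ (two_lt _ _ _ pa pb (fun s H => H) HA) (meet_ab pb (or_introl eq_refl))).
    assert (Mc := Hmeet _ _ (two_lt _ _ _ pa pc (fun s H => H) HA) (meet_ab pc (or_intror eq_refl))).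
    assert (J := Hjoin _ _ (two_lt _ _ _ pb pc (fun s H => H) HB) join_bc).
    assert (Hsub : psubset (h pa) (h p0)).
    { intros x Hx.
      assert (Hx1 : h p1 x) by (apply (Hmon pa p1); [intros y _; exact I | exact Hx]).
      destruct J as [_ J2].
      assert (Hu := J2 (fun y => h pb y \/ h pc y)).
      assert (Hx2 : h pb x \/ h pc x).
      { apply Hu; [|exact Hx1].
        intros s [s0 [[->| ->] <-]] y Hy; auto. }
      destruct Hx2 as [Hb|Hc].
      - destruct Mb as [_ M2].
        apply (M2 (fun y => h pa y /\ h pb y)); [|auto].
        intros s [s0 [[->| ->] <-]] y [Hy1 Hy2]; auto.
      - destruct Mc as [_ M2].
        apply (M2 (fun y => h pa y /\ h pc y)); [|auto].
        intros s [s0 [[->| ->] <-]] y [Hy1 Hy2]; auto. }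
    apply Hemb in Hsub. exact (Hsub t1 eq_refl).
Qed.
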